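(* Let $Q = R_0(u_0)\leftarrow A_1\wedge\cdots\wedge A_m$ be a conjunctive query with $var(Q)=\{X_1,\ldots,X_k\}$ and an arbitrary set of functional dependencies, with $Q=chase(Q)$. Then the color number $C(Q)$ equals the optimal value of the linear program in the real variables $h(S)$, $S\subseteq[k]$ (with $h(\emptyset)=0$): \begin{align*} \text{maximize } \quad & h(u_0)\\ \text{subject to } \quad & h(u_i)\le 1 \quad \text{for all } i=1,\ldots,m,\\ & h(\{t\}\mid\{i_1,\ldots,i_j\})=0 \quad \text{for each induced dependency } X_{i_1},\ldots,X_{i_j}\to X_t,\\ & I(S\mid [k]\setminus S)\ge 0 \quad \text{for every nonempty } S\subseteq[k]. \end{align*}
   Context: A conjunctive query has the form $Q = R_0(u_0)\leftarrow A_1\wedge\cdots\wedge A_m$, where each body atom is $A_i=R_{j(i)}(u_i)$ for a relation name $R_{j(i)}$ (a relation name may occur in several atoms), each $u_i$ is a list of variables of length equal to the arity of $R_{j(i)}$, and every head variable occurs in the body. A functional dependency $V\to a$ on relation $R$ ($V$ a set of attribute positions, $a$ a position) induces, for each body atom $R(u)$, the dependency $\{u[p]:p\in V\}\to u[a]$ among query variables (''induced dependency''). $Q=chase(Q)$ means: no atom repeated, and for every relation $R$, FD $V\to a$ on $R$, and atoms $R(u),R(u')$, if $u[p]=u'[p]$ for all $p\in V$ then $u[a]=u'[a]$. Valid coloring: a map $\mathcal{L}$ assigning to each $X\in var(Q)$ a finite set $\mathcal{L}(X)$ of colors such that for every induced dependency $X_1,\ldots,X_j\to Y$, $\mathcal{L}(Y)\subseteq\bigcup_i\mathcal{L}(X_i)$.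 Color number: $C(Q)=\max_{\mathcal{L}} \frac{|\bigcup_{X\in u_0}\mathcal{L}(X)|}{\max_{i\ge1}|\bigcup_{X\in u_i}\mathcal{L}(X)|}$, the maximum over valid colorings with positive denominator. Linear-program notation: for a variable list $u$, $h(u)=h(S_u)$ with $S_u$ the set of indices of variables in $u$. For $A,B\subseteq[k]$, $h(A\mid B):=h(A\cup B)-h(B)$. For nonempty $T\subseteq[k]$ and $T'\subseteq[k]$ disjoint from $T$, the (multivariate conditional) mutual information is $I(T\mid T'):=\sum_{\emptyset\ne A\subseteq T}(-1)^{|A|+1}h(A\mid T')$ (so $I(\{i\}\mid T')=h(\{i\}\mid T')$ and $I(\{i,j\}\mid T')=h(\{i\}\cup T')+h(\{j\}\cup T')-h(T')-h(\{i,j\}\cup T')$); this matches the recursive definition $I(X_1;\ldots;X_n)=I(X_1;\ldots;X_{n-1})-I(X_1;\ldots;X_{n-1}\mid X_n)$. *)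

(* Defs.v *)
From HB Require Import structures.
From mathcomp Require Import all_boot all_order all_algebra.
Set Implicit Arguments. Unset Strict Implicit. Unset Printing Implicit Defensive.
Import Order.TTheory GRing.Theory Num.Theory.

(* Query variables are X_0..X_{k-1}, i.e. elements of 'I_k.
   A body atom is a pair (r, u): relation name r : nat and argument list u.
   fds r : seq (seq nat * nat) lists the FDs V -> a on relation r
   (positions are 0-based).  The head is the argument list u_0. *)

Section Q.
Variable k : nat.
Notation V := 'I_k.

Definition vset (u : seq V) : {set V} := [set x | x \in u].

Definition induced (fds : nat -> seq (seq nat * nat)) (body : seq (nat * seq V))
  (S : {set V}) (y : V) : Prop :=
  exists2 ru, ru \in body &
  exists2 Wa, Wa \in fds ru.1 &
    onth ru.2 Wa.2 = Some y /\ S = [set x | Some x \in map (onth ru.2) Wa.1].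

(* Q = chase(Q) *)
Definition chased (fds : nat -> seq (seq nat * nat)) (body : seq (nat * seq V)) : Prop :=
  uniq body /\
  forall r (u u' : seq V) (Wa : seq nat * nat),
    Wa \in fds r -> (r, u) \in body -> (r, u') \in body ->
    (forall p, p \in Wa.1 -> onth u p = onth u' p) ->
    onth u Wa.2 = onth u' Wa.2.

Definition valid_coloring (fds : nat -> seq (seq nat * nat)) (body : seq (nat * seq V))
  (n : nat) (L : V -> {set 'I_n}) : Prop :=
  forall S y, induced fds body S y -> L y \subset \bigcup_(x in S) L x.

Definition colors_of n (L : V -> {set 'I_n}) (u : seq V) : {set 'I_n} :=
  \bigcup_(x <- u) L x.

Definition col_num n (L : V -> {set 'I_n}) (head : seq V) : nat :=
  #|colors_of L head|.

Definition col_den n (L : V -> {set 'I_n}) (body : seq (nat * seq V)) : nat :=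
  \max_(ru <- body) #|colors_of L ru.2|.

Local Open Scope ring_scope.
Variable R : realFieldType.

Definition hcond (h : {set V} -> R) (A B : {set V}) : R := h (A :|: B) - h B.

Definition mutinf (h : {set V} -> R) (T T' : {set V}) : R :=
  \sum_(A in powerset T | A != set0) (-1) ^+ (#|A|.+1) * hcond h A T'.

Definition lp_feasible (fds : nat -> seq (seq nat * nat)) (body : seq (nat * seq V))
  (h : {set V} -> R) : Prop :=
  [/\ h set0 = 0,
      (forall ru, ru \in body -> h (vset ru.2) <= 1),
      (forall S y, induced fds body S y -> hcond h [set y] S = 0) &
      (forall S : {set V}, S != set0 -> 0 <= mutinf h S (~: S))].

Definition lp_optimum fds body (head : seq V) (c : R) : Prop :=
  (exists2 h, lp_feasible fds body h & h (vset head) = c) /\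
  (forall h, lp_feasible fds body h -> h (vset head) <= c).

Definition color_ratio n (L : V -> {set 'I_n}) head body : R :=
  (col_num L head)%:R / (col_den L body)%:R.

Definition is_color_number fds body (head : seq V) (c : R) : Prop :=
  (exists n (L : V -> {set 'I_n}),
      [/\ valid_coloring fds body L, (0 < col_den L body)%N & color_ratio L head body = c]) /\
  (forall n (L : V -> {set 'I_n}), valid_coloring fds body L -> (0 < col_den L body)%N ->
      color_ratio L head body <= c).
End Q.

(* Main.v *)
Require Import Defs.
From HB Require Import structures.
From mathcomp Require Import all_boot all_order all_algebra.
Set Implicit Arguments. Unset Strict Implicit. Unset Printing Implicit Defensive.
Import Order.TTheory GRing.Theory Num.Theory.
Local Open Scope ring_scope.

Definition cst := (seq rat * rat)%type.

Definition comb n (p q : cst) : cst :=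
  ([seq p.1`_i / p.1`_n - q.1`_i / q.1`_n | i <- iota 0 n],
   p.2 / p.1`_n - q.2 / q.1`_n).

Definition elim n (cs : seq cst) : seq cst :=
  [seq c <- cs | c.1`_n == 0] ++
  [seq comb n p q | p <- [seq c <- cs | 0 < c.1`_n], q <- [seq c <- cs | c.1`_n < 0]].

Fixpoint proj m n cs := if m is m'.+1 then proj m' n (elim (n + m') cs) else cs.

Section FMsem.
Variable F : realFieldType.

Definition lhs n (c : cst) (x : nat -> F) : F := \sum_(i < n) @ratr F c.1`_i * x i.
Definition sat n (x : nat -> F) (c : cst) : bool := lhs n c x <= @ratr F c.2.
Definition upd (x : nat -> F) n y := fun i => if i == n then y else x i.

Lemma lhs_ext n c x y : (forall i, (i < n)%N -> x i = y i) -> lhs n c x = lhs n c y.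
Proof. by move=> H; apply: eq_bigr => i _; rewrite H. Qed.

Lemma lhs_upd n c x y : lhs n.+1 c (upd x n y) = lhs n c x + @ratr F c.1`_n * y.
Proof.
rewrite /lhs big_ord_recr /= /upd eqxx; congr (_ + _).
by apply: eq_bigr => i _; rewrite ltn_eqF.
Qed.

Lemma lhs_comb n p q x :
  lhs n (comb n p q) x = lhs n p x / @ratr F p.1`_n - lhs n q x / @ratr F q.1`_n.
Proof.
rewrite /lhs !mulr_suml -sumrB; apply: eq_bigr => i _.
rewrite (nth_map 0%N) ?size_iota // nth_iota // add0n.
by rewrite rmorphB !fmorph_div /= mulrBl (mulrAC (ratr p.1`_i)) (mulrAC (ratr q.1`_i)).
Qed.

Lemma interval (ls us : seq F) :
  (forall l u, l \in ls -> u \in us -> l <= u) ->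
  exists y, (forall l, l \in ls -> l <= y) /\ (forall u, u \in us -> y <= u).
Proof.
elim: ls => [|l ls IH] H.
  elim: us {H} => [|u us [y [_ Hy]]]; first by exists 0.
  exists (Num.min u y); split => // v; rewrite inE => /orP[/eqP->|/Hy]; first by rewrite ge_min lexx.
  by move=> Hv; rewrite ge_min Hv orbT.
have [y [H1 H2]] : exists y, (forall l, l \in ls -> l <= y) /\ (forall u, u \in us -> y <= u).
  by apply: IH => l' u Hl Hu; apply: H => //; rewrite inE Hl orbT.
exists (Num.max l y); split.
  move=> l'; rewrite inE => /orP[/eqP->|/H1 Hl]; first by rewrite le_max lexx.
  by rewrite le_max Hl orbT.
by move=> u Hu; rewrite ge_max H2 // andbT; apply: H => //; rewrite inE eqxx.
Qed.

Lemma pos_sat (l a y b : F) : 0 < a -> (l + a * y <= b) = (y <= (b - l) / a).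
Proof. by move=> Ha; rewrite ler_pdivlMr // mulrC lerBrDl. Qed.

Lemma neg_sat (l a y b : F) : a < 0 -> (l + a * y <= b) = ((b - l) / a <= y).
Proof. by move=> Ha; rewrite ler_ndivrMr // mulrC lerBrDl. Qed.

Lemma swap4 (a b c d : F) : (a - b <= c - d) = (d - b <= c - a).
Proof. by rewrite !lerBrDr addrAC [d - b + a]addrAC (addrC a d). Qed.

Lemma elimP n cs x :
  all (sat n x) (elim n cs) <-> exists y, all (sat n.+1 (upd x n y)) cs.
Proof.
pose U (p : cst) := (@ratr F p.2 - lhs n p x) / @ratr F p.1`_n.
have combE p q : sat n x (comb n p q) = (U q <= U p).
  by rewrite /sat lhs_comb /U /= rmorphB !fmorph_div /= !mulrBl swap4.
have satE y c : sat n.+1 (upd x n y) c = (lhs n c x + @ratr F c.1`_n * y <= @ratr F c.2).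
  by rewrite /sat lhs_upd.
split.
- move=> /allP H.
  have Hlu : forall l u, l \in map U [seq c <- cs | c.1`_n < 0] -> u \in map U [seq c <- cs | 0 < c.1`_n] -> l <= u.
    move=> l u /mapP[q Hq ->] /mapP[p Hp ->]; rewrite -combE; apply: H.
    by rewrite mem_cat; apply/orP; right; apply: allpairs_f.
  have [y [Hl Hu]] := interval Hlu.
  exists y; apply/allP => c Hc; rewrite satE.
  case: (ltrgtP c.1`_n 0) => Hcn.
  + by rewrite neg_sat ?ltrq0 //; apply: Hl; apply/map_f; rewrite mem_filter Hcn Hc.
  + by rewrite pos_sat ?ltr0q //; apply: Hu; apply/map_f; rewrite mem_filter Hcn Hc.
  + rewrite Hcn rmorph0 mul0r addr0; have := H c; rewrite mem_cat mem_filter Hcn eqxx Hc.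
    by move=> /(_ isT).
- move=> [y /allP H]; apply/allP => c; rewrite mem_cat => /orP[|].
  + rewrite mem_filter => /andP[/eqP Hc0 Hc]; have := H c Hc.
    by rewrite satE Hc0 rmorph0 mul0r addr0.
  + move=> /allpairsP[[p q] [/= Hp Hq ->]]; rewrite combE.
    move: Hp Hq; rewrite !mem_filter => /andP[Hp0 Hp] /andP[Hq0 Hq].
    apply: (@le_trans _ _ y).
    * by rewrite /U -neg_sat ?ltrq0 // -satE H.
    * by rewrite /U -pos_sat ?ltr0q // -satE H.
Qed.

Lemma projP m n cs x :
  all (sat n x) (proj m n cs) <->
  exists x', (forall i, (i < n)%N -> x' i = x i) /\ all (sat (n + m) x') cs.
Proof.
elim: m cs => [|m IH] cs /=.
  rewrite addn0; split; first by move=> H; exists x.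
  move=> [x' [Hx /allP H]]; apply/allP => c Hc; have := H c Hc.
  by rewrite /sat (@lhs_ext n c x' x).
rewrite addnS; split.
- move=> /IH [x' [Hx /elimP [y Hy]]]; exists (upd x' (n + m) y); split => //.
  by move=> i Hi; rewrite /upd ltn_eqF ?Hx // (leq_trans Hi) ?leq_addr.
- move=> [x' [Hx H]]; apply/IH; exists x'; split => //; apply/elimP; exists (x' (n + m)).
  apply/allP => c Hc; move/allP: H => /(_ c Hc).
  by rewrite /sat (@lhs_ext _ c (upd x' (n+m) (x' (n + m))) x') // => i _; rewrite /upd; case: eqP => [->|].
Qed.
End FMsem.

Section Sets.
Variable T : finType.
Implicit Types A B D E S Y Z : {set T}.

Definition meet A B := [exists x, (x \in A) && (x \in B)].

Lemma meetU A B C : meet A (B :|: C) = meet A B || meet A C.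
Proof.
apply/existsP/orP => [[x /andP[Ha]]|[]/existsP[x /andP[Ha Hb]]].
- by rewrite inE => /orP[Hb|Hc]; [left|right]; apply/existsP; exists x; rewrite Ha.
- by exists x; rewrite inE Ha Hb.
- by exists x; rewrite inE Ha Hb orbT.
Qed.

Lemma meetC A B : meet A B = meet B A.
Proof. by apply/existsP/existsP => [[x /andP[H1 H2]]|[x /andP[H1 H2]]]; exists x; rewrite H1 H2. Qed.

Lemma meet0 A : meet A set0 = false.
Proof. by apply/existsP => [[x]]; rewrite inE andbF. Qed.

Lemma nmeet_sub A B : (~~ meet A B) = (A \subset ~: B).
Proof.
apply/negP/subsetP => [H x Hx|H /existsP[x /andP[Ha Hb]]].
- by rewrite inE; apply/negP => Hb; apply: H; apply/existsP; exists x; rewrite Hx.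
- by move: (H x Ha); rewrite inE Hb.
Qed.

Lemma alt0 (R : nzRingType) D : \sum_(Y in powerset D) (-1) ^+ #|Y| = (D == set0)%:R :> R.
Proof.
case: (set_0Vmem D) => [->|[a Ha]].
  by rewrite powerset0 big_set1 cards0 expr0 eqxx.
have -> : (D == set0) = false by apply/eqP => HD; move: Ha; rewrite HD inE.
rewrite (bigID (fun X : {set T} => a \in X)) /=.
rewrite (reindex_onto (fun Y : {set T} => a |: Y) (fun X : {set T} => X :\ a)) /=; last first.
  by move=> X /andP[_ HX]; rewrite setD1K.
rewrite (eq_big (fun Y : {set T} => (Y \in powerset D) && (a \notin Y)) (fun Y : {set T} => - (-1) ^+ #|Y|)).
- by rewrite sumrN addNr.
- move=> Y; rewrite !powersetE setU11 andbT.
  apply/andP/andP => [[HY /eqP HYa]|[HY HaY]].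
    have HaY : a \notin Y by rewrite -HYa !inE eqxx.
    by split => //; apply: subset_trans HY; apply: subsetUr.
  by rewrite setU1K // eqxx; split => //; rewrite subUset sub1set Ha.
- move=> Y /andP[_ /eqP HYa].
  have HaY : a \notin Y by rewrite -HYa !inE eqxx.
  by rewrite cardsU1 HaY exprS mulN1r.
Qed.

Lemma alt_nmeet (R : nzRingType) D E :
  \sum_(Y in powerset D | ~~ meet Y E) (-1) ^+ #|Y| = (D \subset E)%:R :> R.
Proof.
rewrite -setD_eq0 -alt0; apply: eq_bigl => Y.
by rewrite !powersetE nmeet_sub subsetD disjoints_subset.
Qed.

Lemma sum_sup (R : nzRingType) D (P : pred {set T}) (F : {set T} -> R) :
  \sum_(Z : {set T} | (~: D \subset Z) && P Z) F Z =
  \sum_(Y : {set T} | (Y \subset D) && P (Y :|: ~: D)) F (Y :|: ~: D).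
Proof.
rewrite (reindex_onto (fun Y : {set T} => Y :|: ~: D) (fun Z : {set T} => Z :&: D)) /=.
  apply: eq_bigl => Y; rewrite subsetUr /= setIUl (setIC (~: D)) setICr setU0 andbC.
  congr (_ && _); apply/eqP/idP => [<-|/setIidPl //]; exact: subsetIr.
move=> Z /andP[HZ _]; apply/setP => x; rewrite !inE.
case: (boolP (x \in D)) => Hx; rewrite ?andbT ?andbF /= ?orbF //.
by rewrite (subsetP HZ) // inE Hx.
Qed.
End Sets.

Lemma big_sub_split (R : nzRingType) (I : finType) (P Q : pred I) (F : I -> R) :
  \sum_(i | P i && Q i) F i = \sum_(i | P i) F i - \sum_(i | P i && ~~ Q i) F i.
Proof. by rewrite [X in _ = X - _](bigID Q P) addrK. Qed.

Section Mob.
Variable k : nat.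
Variable R : realFieldType.
Local Notation V := 'I_k.

Definition cov (w : {set V} -> R) (A : {set V}) : R := \sum_(T : {set V} | meet T A) w T.

Lemma meet_compl (T S : {set V}) : meet T (~: S) = ~~ (T \subset S).
Proof. by rewrite -{2}[S]setCK -nmeet_sub negbK. Qed.

Lemma sgS (n : nat) : (-1) ^+ n.+1 = - (-1) ^+ n :> R.
Proof. by rewrite exprS mulN1r. Qed.

Lemma hcond_cov w (B S : {set V}) :
  hcond (cov w) B (~: S) = \sum_(T : {set V} | T \subset S) w T * (meet T B)%:R.
Proof.
rewrite /hcond /cov (bigID (fun T : {set V} => T \subset S)) /=.
have -> : \sum_(T : {set V} | meet T (B :|: ~: S) && ~~ (T \subset S)) w T =
          \sum_(T : {set V} | meet T (~: S)) w T.
  by apply: eq_bigl => T; rewrite meetU meet_compl; case: (T \subset S); rewrite ?orbT ?andbF.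
rewrite addrK big_mkcond [RHS]big_mkcond; apply: eq_bigr => T _.
rewrite meetU meet_compl; case: (T \subset S); rewrite /= ?orbF ?andbT ?andbF //.
by case: (meet T B); rewrite ?mulr1 ?mulr0.
Qed.

Lemma mutinf_cov w (S : {set V}) : S != set0 -> mutinf (cov w) S (~: S) = w S.
Proof.
move=> HS; rewrite /mutinf.
under eq_bigr => B _ do rewrite hcond_cov mulr_sumr.
have -> : \sum_(B in powerset S | B != set0)
      \sum_(T : {set V} | T \subset S) (-1) ^+ #|B|.+1 * (w T * (meet T B)%:R) =
      \sum_(B in powerset S)
      \sum_(T : {set V} | T \subset S) (-1) ^+ #|B|.+1 * (w T * (meet T B)%:R).
  rewrite [RHS](bigD1 set0) ?powersetE ?sub0set //= [X in _ = X + _]big1 ?add0r // => T _.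
  by rewrite meet0 mulr0 mulr0.
rewrite exchange_big /=.
rewrite (eq_bigr (fun T => w T * (S \subset T)%:R)); last first.
  move=> T HT.
  under eq_bigr => B _ do rewrite mulrCA.
  rewrite -mulr_sumr; congr (_ * _).
  have -> : \sum_(B in powerset S) (-1) ^+ #|B|.+1 * (meet T B)%:R =
     \sum_(B in powerset S) (-1) ^+ #|B|.+1 - \sum_(B in powerset S | ~~ meet B T) (-1) ^+ #|B|.+1 :> R.
    rewrite [X in _ = _ - X]big_mkcondr -sumrB; apply: eq_bigr => B _.
    by rewrite meetC; case: (meet B T); rewrite /= ?mulr1 ?mulr0 ?subr0 ?subrr.
  under eq_bigr => B _ do rewrite sgS.
  under [X in _ - X]eq_bigr => B _ do rewrite sgS.
  rewrite !sumrN alt0 alt_nmeet (negbTE HS) opprK /= oppr0 add0r.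
  done.
rewrite (bigD1 S) //= big1 ?addr0 ?subxx ?mulr1 // => T /andP[HT HTS].
suff -> : (S \subset T) = false by rewrite mulr0.
by apply/negP => HST; move: HTS; rewrite eqEsubset HT HST.
Qed.

Lemma sum_pick (h : {set V} -> R) A : \sum_(Z : {set V}) h Z * (Z == A)%:R = h A.
Proof.
rewrite (bigD1 A) //= eqxx mulr1 big1 ?addr0 // => Z /negbTE ->; by rewrite mulr0.
Qed.

Lemma mutinf_alt (h : {set V} -> R) (S : {set V}) : S != set0 ->
  mutinf h S (~: S) = \sum_(Z : {set V} | ~: S \subset Z) - (-1) ^+ #|Z :&: S| * h Z.
Proof.
move=> HS; rewrite /mutinf /hcond.
have -> : \sum_(B in powerset S | B != set0) (-1) ^+ #|B|.+1 * (h (B :|: ~: S) - h (~: S)) =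
          \sum_(B in powerset S) (-1) ^+ #|B|.+1 * (h (B :|: ~: S) - h (~: S)).
  by rewrite [RHS](bigD1 set0) ?powersetE ?sub0set //= set0U subrr mulr0 add0r.
under eq_bigr => B _ do rewrite mulrBr.
rewrite sumrB -mulr_suml.
under [X in _ - X * _]eq_bigr => B _ do rewrite sgS.
rewrite sumrN alt0 (negbTE HS) oppr0 mul0r subr0.
have := sum_sup (R := R) S predT (fun Z => - (-1) ^+ #|Z :&: S| * h Z).
rewrite (eq_bigl (fun Z : {set V} => ~: S \subset Z)); last by move=> Z; rewrite andbT.
move=> ->; apply: eq_big => [Y|Y]; first by rewrite powersetE andbT.
rewrite powersetE => HY.
by rewrite setIUl (setIC (~: S)) setICr setU0 (setIidPl HY) sgS.
Qed.

Lemma cov_mutinf (h : {set V} -> R) A : h set0 = 0 -> cov (fun S => mutinf h S (~: S)) A = h A.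
Proof.
move=> h0; rewrite /cov.
rewrite (eq_bigr (fun S => \sum_(Z : {set V} | ~: S \subset Z) - (-1) ^+ #|Z :&: S| * h Z)); last first.
  move=> S HSA; apply: mutinf_alt; apply/eqP => HS; move: HSA; by rewrite HS meetC meet0.
rewrite (exchange_big_dep predT) //=.
under eq_bigr => Z _ do rewrite -mulr_suml.
have inner (Z : {set V}) : \sum_(S : {set V} | meet S A && (~: S \subset Z)) - (-1) ^+ #|Z :&: S| =
     (Z == A)%:R - (Z == set0)%:R :> R.
  rewrite (eq_bigl (fun S : {set V} => (~: Z \subset S) && meet S A)); last first.
    by move=> S; rewrite andbC -{1}[Z]setCK setCS.
  rewrite (sum_sup Z (fun S => meet S A)).
  rewrite (eq_bigr (fun Y : {set V} => - (-1) ^+ #|Y|)); last first.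
    by move=> Y /andP[HY _]; rewrite setIUr setICr setU0 (setIidPr HY).
  rewrite (eq_bigl (fun Y : {set V} => (Y \in powerset Z) && meet (Y :|: ~: Z) A)); last first.
    by move=> Y; rewrite powersetE.
  rewrite (big_sub_split (fun Y => Y \in powerset Z)).
  rewrite sumrN alt0.
  case: (boolP (A \subset Z)) => HAZ.
    rewrite (eq_bigl (fun Y : {set V} => (Y \in powerset Z) && ~~ meet Y A)); last first.
      by move=> Y; rewrite meetC meetU meet_compl HAZ orbF meetC.
    rewrite sumrN alt_nmeet opprK addrC.
    by rewrite (eqEsubset Z A) HAZ andbT.
  rewrite big_pred0; last by move=> Y; rewrite meetC meetU meet_compl HAZ orbT andbF.
  rewrite subr0.
  suff -> : (Z == A) = false by rewrite sub0r.
  by apply/eqP => HZA; move: HAZ; rewrite HZA subxx.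
under eq_bigr => Z _ do rewrite inner mulrBl.
by rewrite sumrB !(eq_bigr _ (fun Z _ => mulrC _ (h Z))) !sum_pick h0 subr0.
Qed.
End Mob.

Lemma ratr_id (q : rat) : @ratr rat q = q.
Proof. by rewrite /ratr divq_num_den. Qed.

Lemma exists_min (T : eqType) (s : seq T) (f : T -> rat) :
  s != [::] -> exists2 y, y \in s & forall z, z \in s -> f y <= f z.
Proof.
elim: s => [//|a s IH] _.
case: (eqVneq s [::]) => [->|Hs].
  by exists a; rewrite ?mem_head // => z; rewrite inE => /eqP->.
have [y Hy Hmin] := IH Hs.
case: (lerP (f a) (f y)) => Ha.
  exists a; first exact: mem_head.
  by move=> z; rewrite inE => /orP[/eqP->//|/Hmin]; apply: le_trans.
exists y; first by rewrite inE Hy orbT.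
by move=> z; rewrite inE => /orP[/eqP->|/Hmin//]; apply: ltW.
Qed.

Section Main.
Variable k : nat.
Local Notation V := 'I_k.
Variable fds : nat -> seq (seq nat * nat).
Variable body : seq (nat * seq V).
Variable head : seq V.

Definition indb (S : {set V}) (y : V) : bool :=
  has (fun ru : nat * seq V => has (fun Wa : seq nat * nat =>
     (onth ru.2 Wa.2 == Some y) && (S == [set x | Some x \in map (onth ru.2) Wa.1])) (fds ru.1)) body.

Lemma indP S y : induced fds body S y <-> indb S y.
Proof.
split.
- move=> [ru Hru [Wa HWa [H1 H2]]]; apply/hasP; exists ru => //; apply/hasP; exists Wa => //.
  by rewrite H1 H2 !eqxx.
- move=> /hasP[ru Hru /hasP[Wa HWa /andP[/eqP H1 /eqP H2]]].
  by exists ru => //; exists Wa.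
Qed.

Definition validS (T : {set V}) : bool :=
  [forall S : {set V}, [forall y : V, indb S y ==> (y \in T) ==> meet T S]].

Lemma validSP T : ~~ validS T -> exists S y, [/\ indb S y, y \in T & ~~ meet T S].
Proof.
move=> /forallPn[S /forallPn[y]] H; exists S, y; move: H.
by case: (indb S y); case: (y \in T); case: (meet T S).
Qed.

Definition Wfeas (F : realFieldType) (w : {set V} -> F) : Prop :=
  [/\ forall S, 0 <= w S, forall S, ~~ validS S -> w S <= 0 &
      forall ru, ru \in body -> cov w (vset ru.2) <= 1].

Lemma cov_ext (F : realFieldType) (w w' : {set V} -> F) A : w =1 w' -> cov w A = cov w' A.
Proof. by move=> H; apply: eq_bigr => S _; rewrite H. Qed.

Lemma Wfeas_ext (F : realFieldType) (w w' : {set V} -> F) : w =1 w' -> Wfeas w -> Wfeas w'.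
Proof.
move=> H [H1 H2 H3]; split => [S|S|ru Hru]; first by rewrite -H.
  by rewrite -H; apply: H2.
by rewrite -(cov_ext _ H); apply: H3.
Qed.

Definition E : seq {set V} := enum {set V}.
Definition N := size E.

Definition wof (F : realFieldType) (x : nat -> F) : {set V} -> F := fun S => x (index S E).+1.
Definition xof (F : realFieldType) (t : F) (w : {set V} -> F) : nat -> F :=
  fun i => if i is j.+1 then w (nth set0 E j) else t.

Lemma memE S : S \in E.
Proof. by rewrite mem_enum. Qed.

Lemma wof_xof (F : realFieldType) (t : F) w : wof (xof t w) =1 w.
Proof. by move=> S; rewrite /wof /xof nth_index ?memE. Qed.

Definition mkc (ct : rat) (g : {set V} -> rat) (b : rat) : cst := (ct :: [seq g T | T <- E], b).

Lemma sumE (F : realFieldType) (G : {set V} -> F) : \sum_(T : {set V}) G T = \sum_(T <- E) G T.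
Proof. by rewrite /E big_enum. Qed.

Lemma lhs_mkc (F : realFieldType) ct g b (x : nat -> F) :
  lhs N.+1 (mkc ct g b) x = @ratr F ct * x 0%N + \sum_(T : {set V}) @ratr F (g T) * wof x T.
Proof.
rewrite /lhs big_ord_recl /=; congr (_ + _).
rewrite sumE (big_nth set0) big_mkord.
apply: eq_bigr => i _.
rewrite /bump /= add1n (nth_map set0) /wof add0n ?index_uniq //; exact: enum_uniq.
Qed.

Definition c_nonneg S0 := mkc 0 (fun T => if T == S0 then -1 else 0) 0.
Definition c_inv S0 := mkc 0 (fun T => if T == S0 then 1 else 0) 0.
Definition c_atom (ru : nat * seq V) := mkc 0 (fun T => (meet T (vset ru.2))%:R) 1.
Definition c_obj := mkc 1 (fun T => - (meet T (vset head))%:R) 0.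
Definition cs := map c_nonneg E ++ map c_inv (filter (predC validS) E) ++ map c_atom body ++ [:: c_obj].

Lemma sum_pt (F : realFieldType) (w : {set V} -> F) S0 (a : rat) :
  \sum_(T : {set V}) @ratr F (if T == S0 then a else 0) * w T = @ratr F a * w S0.
Proof.
rewrite (bigD1 S0) //= eqxx big1 ?addr0 // => T /negbTE ->; by rewrite rmorph0 mul0r.
Qed.

Lemma sum_cov (F : realFieldType) (w : {set V} -> F) A :
  \sum_(T : {set V}) @ratr F ((meet T A)%:R) * w T = cov w A.
Proof.
rewrite /cov [RHS]big_mkcond /=; apply: eq_bigr => T _.
by case: (meet T A); rewrite ?ratr_nat ?mul1r ?rmorph0 ?mul0r.
Qed.

Lemma sum_ncov (F : realFieldType) (w : {set V} -> F) A :
  \sum_(T : {set V}) @ratr F (- (meet T A)%:R) * w T = - cov w A.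
Proof.
rewrite -sum_cov -sumrN; apply: eq_bigr => T _; by rewrite rmorphN mulNr.
Qed.

Lemma cs_sat (F : realFieldType) (x : nat -> F) :
  all (sat N.+1 x) cs <-> Wfeas (wof x) /\ x 0%N <= cov (wof x) (vset head).
Proof.
have e1 S0 : sat N.+1 x (c_nonneg S0) = (0 <= wof x S0).
  by rewrite /sat lhs_mkc sum_pt rmorph0 mul0r add0r rmorphN rmorph1 mulN1r oppr_le0.
have e2 S0 : sat N.+1 x (c_inv S0) = (wof x S0 <= 0).
  by rewrite /sat lhs_mkc sum_pt rmorph0 mul0r add0r rmorph1 mul1r.
have e3 ru : sat N.+1 x (c_atom ru) = (cov (wof x) (vset ru.2) <= 1).
  by rewrite /sat lhs_mkc sum_cov rmorph0 mul0r add0r rmorph1.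
have e4 : sat N.+1 x c_obj = (x 0%N <= cov (wof x) (vset head)).
  by rewrite /sat lhs_mkc sum_ncov rmorph0 rmorph1 mul1r subr_le0.
rewrite /cs !all_cat /= e4 andbT.
split.
- move=> /and4P[/allP H1 /allP H2 /allP H3 H4]; split => //; split.
  + by move=> S; rewrite -e1; apply: H1; apply: map_f; apply: memE.
  + by move=> S HS; rewrite -e2; apply: H2; apply: map_f; rewrite mem_filter /= HS memE.
  + by move=> ru Hru; rewrite -e3; apply: H3; apply: map_f.
- move=> [[H1 H2 H3] H4]; rewrite H4 andbT; apply/and3P; split.
  + by apply/allP => c /mapP[S _ ->]; rewrite e1.
  + by apply/allP => c /mapP[S]; rewrite mem_filter => /andP[HS _] ->; rewrite e2 H2.
  + by apply/allP => c /mapP[ru Hru ->]; rewrite e3 H3.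
Qed.

Lemma sat1 (F : realFieldType) (t : F) c : sat 1 (fun _ => t) c = (@ratr F c.1`_0 * t <= @ratr F c.2).
Proof. by rewrite /sat /lhs big_ord1. Qed.

Lemma Tfeas (F : realFieldType) (t : F) :
  all (sat 1 (fun _ => t)) (proj N 1 cs) <-> exists w, Wfeas w /\ t <= cov w (vset head).
Proof.
split.
- move=> /projP [x' [Hx /cs_sat [Hw Ht]]].
  by exists (wof x'); split => //; rewrite -(Hx 0%N).
- move=> [w [Hw Ht]]; apply/projP; exists (xof t w); split; first by case.
  apply/cs_sat; split; first exact: (Wfeas_ext (fun S => esym (wof_xof t w S)) Hw).
  by rewrite (cov_ext _ (wof_xof t w)).
Qed.

Lemma cov0 (F : realFieldType) A : cov (fun _ : {set V} => 0 : F) A = 0.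
Proof. by rewrite /cov big1. Qed.

Lemma W0 (F : realFieldType) : Wfeas (fun _ : {set V} => 0 : F).
Proof. by split => // ru _; rewrite cov0 ler01. Qed.

Lemma cov_ge (F : realFieldType) (w : {set V} -> F) T A :
  (forall S, 0 <= w S) -> meet T A -> w T <= cov w A.
Proof.
move=> H0 HT; rewrite /cov (bigD1 T) //= lerDl; apply: sumr_ge0 => S _; exact: H0.
Qed.

Lemma cov_ge_sum (F : realFieldType) (w : {set V} -> F) T (P : pred {set V}) :
  (forall S, 0 <= w S) -> P T -> w T <= \sum_(S : {set V} | P S) w S.
Proof.
move=> H0 HT; rewrite (bigD1 T) //= lerDl; apply: sumr_ge0 => S _; exact: H0.
Qed.

Hypothesis Hhead : forall x, x \in head -> has (fun ru => x \in ru.2) body.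

Lemma cov_le_N (w : {set V} -> rat) : Wfeas w -> cov w (vset head) <= N%:R.
Proof.
move=> [H1 H2 H3].
apply: (@le_trans _ _ (\sum_(T : {set V} | meet T (vset head)) 1)).
  apply: ler_sum => T /existsP[x /andP[HxT]]; rewrite inE => Hxh.
  have /hasP[ru Hru Hx] := Hhead Hxh.
  apply: le_trans (H3 ru Hru); apply: cov_ge => //; apply/existsP; exists x; by rewrite HxT inE.
rewrite big_mkcond /= /N /E -cardE -sumr_const; apply: ler_sum => T _.
by case: (meet T _); rewrite ?lexx ?ler01.
Qed.

Lemma LPopt : exists c : rat, 0 <= c /\
  (exists w : {set V} -> rat, Wfeas w /\ c <= cov w (vset head)) /\
  (forall (F : realFieldType) (w : {set V} -> F), Wfeas w -> cov w (vset head) <= @ratr F c).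
Proof.
set P := proj N 1 cs.
have b0 : forall c, c \in P -> 0 <= c.2.
  move=> c Hc.
  have : all (sat 1 (fun _ => 0 : rat)) P.
    by apply/Tfeas; exists (fun _ => 0); split; [exact: W0|rewrite cov0].
  by move/allP/(_ c Hc); rewrite sat1 mulr0 ratr_id.
have Hpos : [seq c <- P | 0 < c.1`_0] != [::].
  apply/eqP => H0.
  have : all (sat 1 (fun _ => (N.+1)%:R : rat)) P.
    apply/allP => c Hc; rewrite sat1 !ratr_id.
    have Hc0 : c.1`_0 <= 0.
      rewrite leNgt; apply/negP => Hp.
      have : c \in [seq c <- P | 0 < c.1`_0] by rewrite mem_filter Hp Hc.
      by rewrite H0.
    apply: le_trans (b0 c Hc); by rewrite mulr_le0_ge0 // ler0n.
  move/Tfeas => [w [Hw Ht]]; have := le_trans Ht (cov_le_N Hw).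
  by rewrite ler_nat ltnn.
have [c0 Hc0 Hmin] := exists_min (fun c : cst => c.2 / c.1`_0) Hpos.
move: (Hc0); rewrite mem_filter => /andP[Ha Hc0P].
have cv0 : 0 <= c0.2 / c0.1`_0 by rewrite divr_ge0 ?b0 // ltW.
exists (c0.2 / c0.1`_0); split => //; split.
- apply/Tfeas; apply/allP => c Hc; rewrite sat1 !ratr_id.
  case: (ltrP 0 c.1`_0) => Hcp.
    rewrite mulrC -ler_pdivlMr //; apply: Hmin; by rewrite mem_filter Hcp Hc.
  apply: le_trans (b0 c Hc); exact: mulr_le0_ge0.
- move=> F w Hw.
  have : all (sat 1 (fun _ => cov w (vset head))) P by apply/Tfeas; exists w.
  move/allP/(_ c0 Hc0P); rewrite sat1.
  rewrite fmorph_div /= => H; by rewrite ler_pdivlMr ?ltr0q // mulrC.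
Qed.

Definition pat n (L : V -> {set 'I_n}) (g : 'I_n) : {set V} := [set x | g \in L x].

Lemma mem_bigcup_seq n (L : V -> {set 'I_n}) (u : seq V) g :
  (g \in \bigcup_(x <- u) L x) = has (fun x => g \in L x) u.
Proof. by elim: u => [|a u IH]; rewrite ?big_nil ?big_cons ?inE //= IH. Qed.

Lemma mem_colors n (L : V -> {set 'I_n}) u g : (g \in colors_of L u) = meet (pat L g) (vset u).
Proof.
rewrite /colors_of mem_bigcup_seq; apply/hasP/existsP => [[x Hx Hg]|[x /andP[Hg Hx]]].
- by exists x; rewrite !inE Hg Hx.
- by exists x; rewrite inE in Hx; rewrite // inE in Hg.
Qed.

Lemma count_colors n (L : V -> {set 'I_n}) u :
  #|colors_of L u| = (\sum_(T : {set V} | meet T (vset u)) #|[set g | pat L g == T]|)%N.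
Proof.
rewrite -sum1_card (partition_big (pat L) (fun T => meet T (vset u))); last first.
  by move=> g; rewrite mem_colors.
apply: eq_bigr => T HT; rewrite -sum1_card; apply: eq_bigl => g.
rewrite inE mem_colors; case: eqP => [->|]; by rewrite ?HT ?andbF.
Qed.

Lemma color_bound (F : realFieldType) (c : F) n (L : V -> {set 'I_n}) :
  (forall w : {set V} -> F, Wfeas w -> cov w (vset head) <= c) ->
  valid_coloring fds body L -> (0 < col_den L body)%N -> color_ratio F L head body <= c.
Proof.
move=> Hc HL Hd.
set d := col_den L body.
pose w (T : {set V}) : F := (#|[set g | pat L g == T]|)%:R / d%:R.
have Hcov u : cov w (vset u) = (#|colors_of L u|)%:R / d%:R.
  by rewrite /cov -mulr_suml count_colors natr_sum.
have Hd0 : (0 : F) < d%:R by rewrite ltr0n.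
rewrite /color_ratio /col_num -Hcov; apply: Hc; split.
- by move=> T; rewrite divr_ge0 ?ler0n.
- move=> T /validSP [S [y [Hind HyT HTS]]].
  rewrite /w (_ : #|_| = 0%N) ?mul0r //; apply: eq_card0 => g; rewrite !inE.
  apply/negP => /eqP HgT.
  have /subsetP Hsub := HL S y (proj2 (indP S y) Hind).
  have Hgy : g \in L y by move: HyT; rewrite -HgT inE.
  have /bigcupP [x HxS HgLx] := Hsub g Hgy.
  move/negP: HTS; apply; apply/existsP; exists x; by rewrite -HgT inE HgLx HxS.
- move=> ru Hru; rewrite Hcov ler_pdivrMr // mul1r ler_nat.
  by rewrite /d /col_den; apply: leq_bigmax_seq.
Qed.

Definition CT (m : {set V} -> nat) : finType := {T : {set V} & 'I_(m T)}.
Definition Lm (m : {set V} -> nat) : V -> {set 'I_#|CT m|} :=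
  fun x => [set g : 'I_#|CT m| | x \in tag (enum_val g : CT m)].

Lemma card_patm m T : #|[set g | pat (Lm m) g == T]| = m T.
Proof.
have -> : [set g | pat (Lm m) g == T] = enum_rank @: [set p : CT m | tag p == T].
  rewrite (can2_imset_pre _ enum_rankK enum_valK); apply/setP => g; rewrite !inE.
  congr (_ == _); apply/setP => x; by rewrite !inE.
rewrite card_imset; last exact: enum_rank_inj.
have -> : [set p : CT m | tag p == T] =
          (fun j : 'I_(m T) => Tagged (fun T => 'I_(m T)) j) @: [set: 'I_(m T)].
  apply/setP => p; apply/idP/imsetP.
  - case: p => T' j /=; rewrite inE /= => /eqP HT; subst T'; exists j => //; exact: in_setT.
  - by move=> [j _ ->]; rewrite inE.
rewrite card_imset ?cardsT ?card_ord // => j1 j2 H.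
by have := f_equal (tagged_as (Tagged (fun T => 'I_(m T)) j1)) H; rewrite !tagged_asE.
Qed.

Lemma count_Lm m u : #|colors_of (Lm m) u| = (\sum_(T : {set V} | meet T (vset u)) m T)%N.
Proof. by rewrite count_colors; apply: eq_bigr => T _; rewrite card_patm. Qed.

Lemma int_weights (w : {set V} -> rat) : (forall S, 0 <= w S) ->
  exists D : nat, (0 < D)%N /\ exists m : {set V} -> nat, forall S, (m S)%:R = w S * D%:R.
Proof.
move=> H0.
pose dn (S : {set V}) := `|denq (w S)|%N.
have dn0 S : (0 < dn S)%N by rewrite absz_gt0 denq_neq0.
have key S : (`|numq (w S)|%N)%:R = w S * (dn S)%:R :> rat.
  rewrite !natr_absz !ger0_norm ?numq_ge0 ?H0 ?ltW ?denq_gt0 //; exact: numqE.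
exists (\prod_(S : {set V}) dn S)%N; split; first exact: prodn_gt0.
exists (fun S => `|numq (w S)| * \prod_(S' : {set V} | S' != S) dn S')%N => S.
by rewrite /= natrM key [in RHS](bigD1 S) //= natrM mulrA.
Qed.

Lemma cov_diff (F : realFieldType) (w : {set V} -> F) A B :
  cov w (A :|: B) - cov w B = \sum_(T : {set V} | meet T A && ~~ meet T B) w T.
Proof.
rewrite /cov (bigID (fun T => meet T B)) /=.
rewrite (eq_bigl (fun T => meet T B)); last by move=> T; rewrite meetU; case: (meet T B); rewrite ?orbT ?andbF.
rewrite addrC addrK; apply: eq_bigl => T; rewrite meetU.
by case: (meet T B); rewrite ?orbT ?orbF ?andbF ?andbT.
Qed.

Lemma meet1 (T : {set V}) y : meet T [set y] = (y \in T).
Proof.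
apply/existsP/idP => [[x /andP[Hx]]|Hy]; first by rewrite inE => /eqP <-.
by exists y; rewrite Hy inE eqxx.
Qed.

Lemma h_to_w (F : realFieldType) (h : {set V} -> F) : lp_feasible fds body h ->
  Wfeas (fun S => mutinf h S (~: S)) /\ forall A, h A = cov (fun S => mutinf h S (~: S)) A.
Proof.
move=> [h0 Hat Hfd Hmi].
have HM A : h A = cov (fun S => mutinf h S (~: S)) A by rewrite cov_mutinf.
have Hnn S : 0 <= mutinf h S (~: S).
  case: (eqVneq S set0) => [->|HS]; last exact: Hmi.
  rewrite /mutinf big1 // => A /andP[]; rewrite powerset0 inE => /eqP ->; by rewrite eqxx.
split => //; split => //.
- move=> T /validSP [S [y [Hind HyT HTS]]].
  have := Hfd S y (proj2 (indP S y) Hind).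
  rewrite /hcond !HM cov_diff => Hsum.
  rewrite -Hsum; apply: (cov_ge_sum (P := fun T' : {set V} => meet T' [set y] && ~~ meet T' S) Hnn) => /=.
  by rewrite meet1 HyT.
- by move=> ru Hru; rewrite -HM; apply: Hat.
Qed.

Lemma w_to_h (F : realFieldType) (w : {set V} -> F) : Wfeas w -> lp_feasible fds body (cov w).
Proof.
move=> [H1 H2 H3]; split.
- by rewrite /cov big_pred0 // => T; rewrite meet0.
- exact: H3.
- move=> S y /indP Hind; rewrite /hcond cov_diff big1 // => T /andP[HyT HTS].
  rewrite meet1 in HyT.
  have Hinv : ~~ validS T.
    apply/negP => /forallP /(_ S) /forallP /(_ y); by rewrite Hind HyT (negbTE HTS).
  by apply/eqP; rewrite eq_le H2 // H1.
- by move=> S HS; rewrite mutinf_cov // H1.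
Qed.

Lemma cov_ratr (F : realFieldType) (w : {set V} -> rat) A :
  cov (fun S => @ratr F (w S)) A = @ratr F (cov w A).
Proof. by rewrite /cov rmorph_sum. Qed.

Lemma Wfeas_ratr (F : realFieldType) (w : {set V} -> rat) : Wfeas w -> Wfeas (fun S => @ratr F (w S)).
Proof.
move=> [H1 H2 H3]; split => [S|S HS|ru Hru].
- by rewrite ler0q.
- by rewrite lerq0 H2.
- by rewrite cov_ratr -(rmorph1 (@ratr F)) ler_rat H3.
Qed.

End Main.

Unset Implicit Arguments.

Theorem theorem4p1 (R : realFieldType) (k : nat) (ar : nat -> nat)
  (fds : nat -> seq (seq nat * nat)) (head : seq 'I_k) (body : seq (nat * seq 'I_k))
  (Hatoms : forall ru, ru \in body -> size ru.2 = ar ru.1)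
  (Hfds : forall r Wa, Wa \in fds r -> (all (fun p => p < ar r) Wa.1 && (Wa.2 < ar r))%N)
  (Hvars : forall x : 'I_k, has (fun ru => x \in ru.2) body)
  (Hhead : forall x, x \in head -> has (fun ru => x \in ru.2) body)
  (Hchase : chased fds body)
  (Hdef : exists n (L : 'I_k -> {set 'I_n}),
            valid_coloring fds body L /\ (0 < col_den L body)%N) :
  exists c : R, is_color_number fds body head c /\ lp_optimum fds body head c.
Proof.
have [c [c0 [[ws [Hws Hcws]] Hub]]] := LPopt fds Hhead.
have Hcws' : cov ws (vset head) = c.
  by apply/le_anti; rewrite Hcws andbT; have := Hub _ _ Hws; rewrite ratr_id.
have HubR := Hub R.
have Hbound n (L : 'I_k -> {set 'I_n}) : valid_coloring fds body L -> (0 < col_den L body)%N ->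
    color_ratio R L head body <= ratr c.
  by move=> HL Hd; apply: color_bound HubR HL Hd.
exists (ratr c); split; last split.
- split; last exact: Hbound.
  case: (eqVneq c 0) => [Hc0|Hcn0].
  + have [n [L [HL Hd]]] := Hdef.
    exists n, L; split => //.
    by apply/le_anti; rewrite Hbound //= Hc0 rmorph0 /color_ratio divr_ge0 ?ler0n.
  have Hws0 : forall S, 0 <= ws S by case: Hws.
  have [D [D0 [m Hm]]] := int_weights Hws0.
  pose L := Lm m.
  have Hrow u : ((#|colors_of L u|)%:R : rat) = cov ws (vset u) * D%:R.
    by rewrite count_Lm natr_sum /cov mulr_suml; apply: eq_bigr => T _; rewrite Hm.
  have HL : valid_coloring fds body L.
    move=> S y /indP Hind; apply/subsetP => g; rewrite inE => HyT.
    have mT : (0 < m (tag (enum_val g : CT m)))%N.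
      exact: leq_ltn_trans (leq0n _) (ltn_ord (tagged (enum_val g : CT m))).
    have HvT : validS fds body (tag (enum_val g : CT m)).
      apply/negP => /negP Hinv; case: Hws => _ H2 _; have Hle := H2 _ Hinv.
      have HT0 : ws (tag (enum_val g : CT m)) = 0 by apply/le_anti; rewrite Hle Hws0.
      move: (Hm (tag (enum_val g : CT m))); rewrite HT0 mul0r => /eqP; rewrite pnatr_eq0 => /eqP HmT.
      by rewrite HmT in mT.
    move/forallP: HvT => /(_ S) /forallP /(_ y); rewrite Hind HyT /= => /existsP[x /andP[HxT HxS]].
    by apply/bigcupP; exists x => //; rewrite inE.
  have Hnum : ((col_num L head)%:R : rat) = c * D%:R by rewrite /col_num Hrow Hcws'.
  have Hden : (col_den L body <= D)%N.
    apply/bigmax_leqP_seq => ru Hru _.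
    rewrite -(@ler_nat rat) Hrow -[X in _ <= X]mul1r; apply: ler_wpM2r; first exact: ler0n.
    by case: Hws => _ _ H3; apply: H3.
  have Hdpos : (0 < col_den L body)%N.
    have : (col_num L head != 0)%N.
      apply/eqP => H0; move: Hnum; rewrite H0 => /esym/eqP.
      by rewrite mulf_eq0 (negbTE Hcn0) pnatr_eq0 eqn0Ngt D0.
    rewrite /col_num cards_eq0 => /set0Pn [g Hg].
    move: Hg; rewrite mem_colors => /existsP[x /andP[Hxg Hxh]].
    rewrite inE in Hxh; have /hasP[ru Hru Hxu] := Hhead x Hxh.
    have Hgu : g \in colors_of L ru.2 by rewrite mem_colors; apply/existsP; exists x; rewrite Hxg inE.
    apply: (@leq_trans #|colors_of L ru.2|); first by apply/card_gt0P; exists g.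
    by rewrite /col_den; apply: leq_bigmax_seq.
  exists #|CT m|, L; split => //.
  apply/le_anti; rewrite Hbound //=.
  rewrite /color_ratio.
  have -> : ((col_num L head)%:R : R) = ratr c * D%:R.
    by have := congr1 (@ratr R) Hnum; rewrite ratr_nat rmorphM /= ratr_nat.
  rewrite ler_pdivlMr ?ltr0n //.
  by apply: ler_wpM2l; [rewrite ler0q | rewrite ler_nat].
- exists (cov (fun S => ratr (ws S))); first by apply: w_to_h; apply: Wfeas_ratr.
  by rewrite cov_ratr Hcws'.
- move=> h /h_to_w [Hw HM]; rewrite HM; exact: HubR.
Qed.
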